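(* Let $D$ be a finite distributive lattice and $Q\subseteq D$, and suppose the inclusion $Q\subseteq D$ is chain-representable, say $Q=\mathrm{Rep}(C,\sigma,D)$ for a $J(D)$-colored chain $(C,\sigma,D)$. Then there exist a finite algebra $A$ with $|A|=|C|$ and a lattice isomorphism $\phi\colon\mathrm{Con}(A)\to D$ such that $\phi(\mathrm{Princ}(A))=Q$. (Here $1_D\in Q$ is not assumed.)
   Context: $J(D)$ is the set of nonzero join-irreducible elements of $D$. A $J(D)$-colored chain is a triple $(C,\sigma,D)$ where $C$ is a finite chain and $\sigma\colon\mathrm{Prime}(C)\to J(D)$ is a surjective map from the set $\mathrm{Prime}(C)$ of prime intervals (covering pairs) of $C$ onto $J(D)$. For an interval $I$ of $C$, $\mathrm{rep}(I)=\bigvee_{\mathfrak p\in\mathrm{Prime}(I)}\sigma(\mathfrak p)$ (join in $D$, empty join $=0_D$), and $\mathrm{Rep}(C,\sigma,D)=\{\mathrm{rep}(I): I\text{ an interval of }C\}$. The inclusion $Q\subseteq D$ is chain-representable if $Q=\mathrm{Rep}(C,\sigma,D)$ for some such triple. For an algebra $A$, $\mathrm{Con}(A)$ is its congruence lattice and $\mathrm{Princ}(A)$ its set of principal congruences. *)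

(* Defs.v *)
From HB Require Import structures.
From mathcomp Require Import all_boot all_order.
Set Implicit Arguments. Unset Strict Implicit. Unset Printing Implicit Defensive.
Import Order.TTheory.
Local Open Scope order_scope.

Definition join_irr {d : Order.disp_t} {D : finTBDistrLatticeType d} (x : D) : Prop :=
  x != \bot /\ (forall y z : D, x = y `|` z -> x = y \/ x = z).

Definition prime_int {dc : Order.disp_t} {C : finOrderType dc} (p : C * C) : bool :=
  (p.1 < p.2) && [forall c : C, ~~ ((p.1 < c) && (c < p.2))].

(* (C, sigma, D) is a J(D)-colored chain: sigma maps Prime(C) onto J(D).
   sigma is a total function on pairs; only its values on prime intervals matter. *)
Definition colored_chain {d dc : Order.disp_t} {D : finTBDistrLatticeType d}
  {C : finOrderType dc} (sigma : C * C -> D) : Prop :=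
  (forall p, prime_int p -> join_irr (sigma p)) /\
  (forall j : D, join_irr j -> exists p, prime_int p /\ sigma p = j).

Definition rep {d dc : Order.disp_t} {D : finTBDistrLatticeType d}
  {C : finOrderType dc} (sigma : C * C -> D) (a b : C) : D :=
  \join_(p : C * C | prime_int p && (a <= p.1) && (p.2 <= b)) sigma p.

Definition Rep {d dc : Order.disp_t} {D : finTBDistrLatticeType d}
  {C : finOrderType dc} (sigma : C * C -> D) : {set D} :=
  [set x : D | [exists a : C, exists b : C, (a <= b) && (x == rep sigma a b)]].

Record algebra (T : Type) := Algebra {
  op_index : Type;
  arity : op_index -> nat;
  op : forall i : op_index, (arity i).-tuple T -> T
}.

Definition is_congruence (T : finType) (A : algebra T) (th : {set T * T}) : Prop :=
  [/\ (forall x : T, (x, x) \in th),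
      (forall x y : T, (x, y) \in th -> (y, x) \in th),
      (forall x y z : T, (x, y) \in th -> (y, z) \in th -> (x, z) \in th)
    & (forall (i : op_index A) (u v : (arity i).-tuple T),
         (forall k : 'I_(arity i), (tnth u k, tnth v k) \in th) ->
         (op u, op v) \in th)].

Definition is_principal (T : finType) (A : algebra T) (th : {set T * T}) : Prop :=
  is_congruence A th /\
  exists a b : T, (a, b) \in th /\
    (forall ps, is_congruence A ps -> (a, b) \in ps -> th \subset ps).

(* phi : Con(A) -> D is a lattice isomorphism (Con(A) ordered by inclusion);
   for lattices, lattice isomorphisms are exactly order isomorphisms. *)
Definition con_lattice_iso (T : finType) (A : algebra T) {d : Order.disp_t}
  {D : finTBDistrLatticeType d} (phi : {set T * T} -> D) : Prop :=
  [/\ (forall th ps, is_congruence A th -> is_congruence A ps ->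
         phi th = phi ps -> th = ps),
      (forall x : D, exists th, is_congruence A th /\ phi th = x)
    & (forall th ps, is_congruence A th -> is_congruence A ps ->
         (th \subset ps <-> phi th <= phi ps))].

(* Main.v *)
Require Import Defs.
From HB Require Import structures.
From mathcomp Require Import all_boot all_order.
Import Order.TTheory.
Local Open Scope order_scope.

Set Implicit Arguments. Unset Strict Implicit. Unset Printing Implicit Defensive.

Lemma join_prime {d : Order.disp_t} {D : finTBDistrLatticeType d} (j : D) :
  join_irr j -> forall (I : Type) (s : seq I) (P : pred I) (F : I -> D),
  j <= \join_(i <- s | P i) F i -> exists i, P i /\ j <= F i.
Proof.
move=> [nj hj] I; elim=> [|a s IH] P F.
  by rewrite big_nil lex0 (negbTE nj).
rewrite big_cons; case: ifP => Pa H; last exact: IH.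
have: j = (j `&` F a) `|` (j `&` \join_(i <- s | P i) F i).
  by rewrite -meetUr; apply/esym/meet_idPl.
case/hj => E.
  by exists a; split=> //; apply/meet_idPl; rewrite -E.
by apply: IH; apply/meet_idPl; rewrite -E.
Qed.

Definition jb {d : Order.disp_t} {D : finTBDistrLatticeType d} (x : D) : bool :=
  (x != \bot) && [forall y, forall z, (x == y `|` z) ==> ((x == y) || (x == z))].

Lemma jbP {d : Order.disp_t} {D : finTBDistrLatticeType d} (x : D) :
  join_irr x <-> jb x.
Proof.
split.
  move=> [nx hx]; rewrite /jb nx /=; apply/forallP => y; apply/forallP => z.
  by apply/implyP => /eqP /hx [->|->]; rewrite eqxx ?orbT.
move=> /andP[nx /forallP H]; split=> // y z E.
have := H y; move=> /forallP /(_ z) /implyP; rewrite E eqxx => /(_ isT).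
by case/orP => /eqP ->; [left|right].
Qed.

Lemma decomp {d : Order.disp_t} {D : finTBDistrLatticeType d} (x : D) :
  x <= \join_(j | jb j && (j <= x)) j.
Proof.
suff H: forall n (x : D), (#|[set y : D | (y < x)%O]| <= n)%N ->
  x <= \join_(j | jb j && (j <= x)) j by apply: H (leqnn _).
elim=> [|n IH] {}x hx.
  have -> : x = \bot.
    case: (eqVneq x \bot) => // nx.
    have: (\bot : D) \in [set y : D | y < x] by rewrite inE lt_def nx le0x.
    by move: hx; rewrite leqn0 cards_eq0 => /eqP ->; rewrite inE.
  exact: le0x.
case: (boolP (jb x)) => jx.
  by apply: (@joins_sup _ _ _ x (fun j => jb j && (j <= x)) id); rewrite jx lexx.
case: (eqVneq x \bot) => [->|nx]; first exact: le0x.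
move: jx; rewrite /jb nx /= negb_forall => /existsP [y].
rewrite negb_forall => /existsP[z]; rewrite negb_imply negb_or.
move=> /and3P [/eqP exyz nxy nxz].
have ly : y < x by rewrite lt_def nxy /= exyz leUl.
have lz : z < x by rewrite lt_def nxz /= exyz leUr.
have card_lt : forall w, w < x -> (#|[set v : D | (v < w)%O]| <= n)%N.
  move=> w lw; rewrite -ltnS; apply: leq_trans hx; apply: proper_card.
  apply/properP; split.
    by apply/subsetP => v; rewrite !inE => h; apply: lt_trans h lw.
  by exists w; rewrite !inE ?lw ?ltxx.
have mono : forall w, w < x -> \join_(j | jb j && (j <= w)) j <= \join_(j | jb j && (j <= x)) j.
  move=> w lw; apply/joinsP => j /andP[jj jw].
  apply: (@joins_sup _ _ _ j (fun j => jb j && (j <= x)) id).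
  by rewrite jj (le_trans jw (ltW lw)).
rewrite {1}exyz leUx; apply/andP; split.
  exact: le_trans (IH _ (card_lt _ ly)) (mono _ ly).
exact: le_trans (IH _ (card_lt _ lz)) (mono _ lz).
Qed.

Definition inside {dc : Order.disp_t} {C : finOrderType dc} (p : C * C) (a b : C) : bool :=
  ((a <= p.1) && (p.2 <= b)) || ((b <= p.1) && (p.2 <= a)).

Lemma prime_lt {dc : Order.disp_t} {C : finOrderType dc} (p : C * C) :
  prime_int p -> p.1 < p.2.
Proof. by case/andP. Qed.

Lemma prime_up {dc : Order.disp_t} {C : finOrderType dc} (p : C * C) (c : C) :
  prime_int p -> p.1 < c -> p.2 <= c.
Proof.
case/andP => _ /forallP /(_ c); rewrite negb_and => /orP[h|h] h'.
  by rewrite h' in h.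
by rewrite leNgt.
Qed.

Lemma cover {dc : Order.disp_t} {C : finOrderType dc} (p : C * C) (a b c : C) :
  prime_int p -> inside p a c -> inside p a b || inside p b c.
Proof.
move=> pp; rewrite /inside => /orP[/andP[h1 h2]|/andP[h1 h2]];
  case: (leP b p.1) => hb; rewrite ?(prime_up pp hb) ?h1 ?h2 ?hb /= ?orbT //.
Qed.

Definition rr {d dc : Order.disp_t} {D : finTBDistrLatticeType d}
  {C : finOrderType dc} (sigma : C * C -> D) (a b : C) : D :=
  \join_(p : C * C | prime_int p && inside p a b) sigma p.


Lemma rr_sym {d dc : Order.disp_t} {D : finTBDistrLatticeType d}
  {C : finOrderType dc} (sigma : C * C -> D) a b : rr sigma a b = rr sigma b a.
Proof. by apply: eq_bigl => p; rewrite /inside orbC. Qed.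

Lemma rr_refl {d dc : Order.disp_t} {D : finTBDistrLatticeType d}
  {C : finOrderType dc} (sigma : C * C -> D) a : rr sigma a a = \bot.
Proof.
apply/eqP; rewrite -lex0; apply/joinsP => p /andP[pp].
rewrite /inside orbb => /andP[h1 h2].
by have := lt_le_trans (prime_lt pp) (le_trans h2 h1); rewrite ltxx.
Qed.

Lemma rr_trans {d dc : Order.disp_t} {D : finTBDistrLatticeType d}
  {C : finOrderType dc} (sigma : C * C -> D) a b c :
  rr sigma a c <= rr sigma a b `|` rr sigma b c.
Proof.
apply/joinsP => p /andP[pp ins].
case/orP: (cover b pp ins) => h.
  apply: le_trans (leUl _ _).
  by apply: (@joins_sup _ _ _ p (fun p => prime_int p && inside p a b) sigma); rewrite pp h.
apply: le_trans (leUr _ _).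
by apply: (@joins_sup _ _ _ p (fun p => prime_int p && inside p b c) sigma); rewrite pp h.
Qed.

Lemma rr_mono {d dc : Order.disp_t} {D : finTBDistrLatticeType d}
  {C : finOrderType dc} (sigma : C * C -> D) p a b :
  prime_int p -> inside p a b -> sigma p <= rr sigma a b.
Proof.
by move=> pp h; apply: (@joins_sup _ _ _ p (fun p => prime_int p && inside p a b) sigma); rewrite pp h.
Qed.

Lemma rr_prime {d dc : Order.disp_t} {D : finTBDistrLatticeType d}
  {C : finOrderType dc} (sigma : C * C -> D) p :
  prime_int p -> rr sigma p.1 p.2 <= sigma p.
Proof.
move=> pp; apply/joinsP => q /andP[pq]; rewrite /inside => /orP[/andP[h1 h2]|/andP[h1 h2]];
  last first.
  have := lt_trans (lt_le_trans (prime_lt pp) h1) (lt_le_trans (prime_lt pq) h2).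
  by rewrite ltxx.
have e1 : q.1 = p.1.
  apply/eqP; rewrite eq_sym eq_le h1 /=; rewrite leNgt; apply/negP => lt1.
  move: pp => /andP[_ /forallP /(_ q.1)]; rewrite lt1 /=.
  by rewrite (lt_le_trans (prime_lt pq) h2).
have e2 : q.2 = p.2.
  apply/eqP; rewrite eq_le h2 /=; rewrite leNgt; apply/negP => lt2.
  move: pp => /andP[_ /forallP /(_ q.2)]; rewrite lt2 andbT.
  by rewrite -e1 (prime_lt pq).
by case: p q e1 e2 {pp pq h1 h2} => [p1 p2] [q1 q2] /= -> ->.
Qed.

Lemma rep_rr {d dc : Order.disp_t} {D : finTBDistrLatticeType d}
  {C : finOrderType dc} (sigma : C * C -> D) a b :
  a <= b -> rep sigma a b = rr sigma a b.
Proof.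
move=> hab; apply: eq_bigl => p; case pp: (prime_int p) => //=.
have E : ((b <= p.1) && (p.2 <= a)) = false.
  apply/negbTE/negP => /andP[h1 h2].
  have := le_lt_trans hab (lt_le_trans (le_lt_trans h1 (prime_lt pp)) h2).
  by rewrite ltxx.
by rewrite /inside E orbF.
Qed.

Definition opT {d dc : Order.disp_t} {D : finTBDistrLatticeType d}
  {C : finOrderType dc} (sigma : C * C -> D) :=
  {f : C -> C | forall a b, rr sigma (f a) (f b) <= rr sigma a b}.

Definition Alg {d dc : Order.disp_t} {D : finTBDistrLatticeType d}
  {C : finOrderType dc} (sigma : C * C -> D) : algebra C :=
  @Algebra C (opT sigma) (fun _ => 1%N) (fun i u => sval i (tnth u ord0)).

Definition th_of {d dc : Order.disp_t} {D : finTBDistrLatticeType d}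
  {C : finOrderType dc} (sigma : C * C -> D) (x : D) : {set C * C} :=
  [set ab | rr sigma ab.1 ab.2 <= x].

Definition phi {d dc : Order.disp_t} {D : finTBDistrLatticeType d}
  {C : finOrderType dc} (sigma : C * C -> D) (th : {set C * C}) : D :=
  \join_(ab in th) rr sigma ab.1 ab.2.

Lemma cong_fun {d dc : Order.disp_t} {D : finTBDistrLatticeType d}
  {C : finOrderType dc} (sigma : C * C -> D) th a b (f : opT sigma) :
  is_congruence (Alg sigma) th -> (a, b) \in th -> (sval f a, sval f b) \in th.
Proof.
case=> _ _ _ H hab.
have := H f [tuple a] [tuple b]; apply => k.
by rewrite (ord1 k).
Qed.

Lemma th_cong {d dc : Order.disp_t} {D : finTBDistrLatticeType d}
  {C : finOrderType dc} (sigma : C * C -> D) x :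
  is_congruence (Alg sigma) (th_of sigma x).
Proof.
split.
- by move=> a; rewrite inE /= rr_refl le0x.
- by move=> a b; rewrite !inE /= rr_sym.
- move=> a b c; rewrite !inE /= => h1 h2.
  by apply: le_trans (rr_trans sigma a b c) _; rewrite leUx h1 h2.
- move=> i u v H; have := H ord0; rewrite !inE /= => h.
  exact: le_trans (svalP i _ _) h.
Qed.

Lemma stepA {d dc : Order.disp_t} {D : finTBDistrLatticeType d}
  {C : finOrderType dc} (sigma : C * C -> D) th p :
  (forall p, prime_int p -> join_irr (sigma p)) ->
  is_congruence (Alg sigma) th -> prime_int p -> sigma p <= phi sigma th ->
  (p.1, p.2) \in th.
Proof.
move=> hs hc pp hle.
have [ab [hab h1]] := join_prime (hs p pp) hle.
have [q [/andP[pq ins] h2]] := join_prime (hs p pp) h1.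
pose f := fun z : C => if z <= q.1 then p.1 else p.2.
have Hf : forall a b, rr sigma (f a) (f b) <= rr sigma a b.
  move=> a b; rewrite /f.
  have key : forall x y, x <= q.1 -> ~~ (y <= q.1) ->
      rr sigma p.1 p.2 <= rr sigma x y.
    move=> x y hx hy; rewrite -ltNge in hy.
    apply: le_trans (rr_prime sigma pp) _; apply: le_trans h2 _.
    by apply: (@rr_mono _ _ _ _ sigma q x y pq); rewrite /inside hx (prime_up pq hy).
  case hx: (a <= q.1); case hy: (b <= q.1);
    rewrite /= ?rr_refl ?le0x //.
    by apply: key; rewrite ?hx ?hy.
  by rewrite rr_sym [rr sigma a b]rr_sym; apply: key; rewrite ?hx ?hy.
have hab' : (ab.1, ab.2) \in th by rewrite -surjective_pairing.
have : (f ab.1, f ab.2) \in th := cong_fun (exist _ f Hf) hc hab'.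
have fq2 : forall z, q.2 <= z -> f z = p.2.
  by move=> z hz; rewrite /f leNgt (lt_le_trans (prime_lt pq) hz).
have fq1 : forall z, z <= q.1 -> f z = p.1 by move=> z hz; rewrite /f hz.
move: ins; rewrite /inside => /orP[/andP[i1 i2]|/andP[i1 i2]].
  by rewrite fq1 // fq2.
rewrite (fq2 ab.1) // (fq1 ab.2) // => h; case: hc => _ hsym _ _; exact: hsym h.
Qed.

Lemma stepB {d dc : Order.disp_t} {D : finTBDistrLatticeType d}
  {C : finOrderType dc} (sigma : C * C -> D) th :
  is_congruence (Alg sigma) th ->
  forall n a b, a <= b -> (#|[set z | ((a <= z) && (z <= b))%O]| <= n)%N ->
  (forall p, prime_int p -> a <= p.1 -> p.2 <= b -> (p.1, p.2) \in th) ->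
  (a, b) \in th.
Proof.
move=> hc; elim=> [|n IH] a b hab hn hp.
  have: a \in [set z | (a <= z) && (z <= b)] by rewrite inE lexx hab.
  by move: hn; rewrite leqn0 cards_eq0 => /eqP ->; rewrite inE.
case: (eqVneq a b) => [<-|nab]; first by case: hc.
case pr: (prime_int (a, b)); first by apply: (hp (a, b)).
move: pr; rewrite /prime_int /= lt_def eq_sym nab hab /= => /negbT.
rewrite negb_forall; case/existsP => c; rewrite negbK => /andP[ac cb].
have sub : forall u v, a <= u -> v <= b -> u <= v ->
    (u != a) || (v != b) ->
    (#|[set z | ((u <= z) && (z <= v))%O]| <= n)%N.
  move=> u v au vb uv ne; rewrite -ltnS; apply: leq_trans hn; apply: proper_card.
  apply/properP; split.
    apply/subsetP => z; rewrite !inE => /andP[h1 h2].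
    by rewrite (le_trans au h1) (le_trans h2 vb).
  case/orP: ne => ne.
    exists a; first by rewrite inE lexx hab.
    rewrite inE; apply/negP => /andP[ua _].
    by move/eqP: ne; apply; apply: le_anti; rewrite ua au.
  exists b; first by rewrite inE lexx hab.
  rewrite inE; apply/negP => /andP[_ bv].
  by move/eqP: ne; apply; apply: le_anti; rewrite bv vb.
have h1 : (a, c) \in th.
  apply: IH (ltW ac) (sub _ _ (lexx a) (ltW cb) (ltW ac) _) _.
    by rewrite orbC lt_eqF.
  move=> p pp h h'; apply: hp => //; exact: le_trans h' (ltW cb).
have h2 : (c, b) \in th.
  apply: IH (ltW cb) (sub _ _ (ltW ac) (lexx b) (ltW cb) _) _.
    by rewrite gt_eqF.
  move=> p pp h h'; apply: hp => //; exact: le_trans (ltW ac) h.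
by case: hc => _ _ htr _; exact: htr h1 h2.
Qed.

Lemma key {d dc : Order.disp_t} {D : finTBDistrLatticeType d}
  {C : finOrderType dc} (sigma : C * C -> D) th a b :
  (forall p, prime_int p -> join_irr (sigma p)) ->
  is_congruence (Alg sigma) th ->
  (a, b) \in th <-> rr sigma a b <= phi sigma th.
Proof.
move=> hs hc; split=> h.
  exact: (@joins_sup _ _ _ (a, b) (fun ab => ab \in th) (fun ab => rr sigma ab.1 ab.2)).
have gen : forall a b, a <= b -> rr sigma a b <= phi sigma th -> (a, b) \in th.
  move=> a0 b0 hab hr.
  apply: (stepB hc hab (leqnn _)) => p pp h1 h2.
  apply: (stepA hs hc pp); apply: le_trans hr.
  by apply: (rr_mono sigma pp); rewrite /inside h1 h2.
case: (leP a b) => hab; first exact: gen.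
have : (b, a) \in th by apply: gen (ltW hab) _; rewrite rr_sym.
by case: hc => _ hsym _ _; exact: hsym.
Qed.

Lemma phi_th_of {d dc : Order.disp_t} {D : finTBDistrLatticeType d}
  {C : finOrderType dc} (sigma : C * C -> D) x :
  colored_chain sigma -> phi sigma (th_of sigma x) = x.
Proof.
move=> [hs1 hs2]; apply/le_anti/andP; split.
  by apply/joinsP => ab; rewrite inE.
apply: le_trans (decomp x) _; apply/joinsP => j /andP[/jbP jj jx].
have [p [pp ej]] := hs2 j jj; subst j.
have hin : (p.1, p.2) \in th_of sigma x.
  by rewrite /th_of inE /=; apply: le_trans (rr_prime sigma pp) jx.
have hi : inside p p.1 p.2 by rewrite /inside !lexx.
apply: le_trans (rr_mono sigma pp hi) _.
exact: (@joins_sup _ _ _ (p.1, p.2) (fun ab => ab \in th_of sigma x) (fun ab => rr sigma ab.1 ab.2)).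
Qed.

Lemma th_phi {d dc : Order.disp_t} {D : finTBDistrLatticeType d}
  {C : finOrderType dc} (sigma : C * C -> D) th :
  colored_chain sigma -> is_congruence (Alg sigma) th ->
  th = th_of sigma (phi sigma th).
Proof.
move=> [hs1 _] hc; apply/setP => [[a b]]; rewrite inE /=.
apply/idP/idP => h; exact/(key _ _ hs1 hc).
Qed.

Lemma phi_mono {d dc : Order.disp_t} {D : finTBDistrLatticeType d}
  {C : finOrderType dc} (sigma : C * C -> D) (th ps : {set C * C}) :
  colored_chain sigma -> is_congruence (Alg sigma) ps ->
  th \subset ps -> phi sigma th <= phi sigma ps.
Proof.
move=> [hs1 _] hc sub; apply/joinsP => [[a b]] hab.
by apply/(key _ _ hs1 hc); apply: (subsetP sub).
Qed.

Theorem proposition1p8 (d : Order.disp_t) (D : finTBDistrLatticeType d) (Q : {set D})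
  (dc : Order.disp_t) (C : finOrderType dc) (sigma : C * C -> D) :
  colored_chain sigma -> Q = Rep sigma ->
  exists (T : finType) (A : algebra T) (phi : {set T * T} -> D),
    [/\ #|T| = #|C|,
        con_lattice_iso A phi
      & (forall x : D, x \in Q <-> exists th, is_principal A th /\ phi th = x)].
Proof.
move=> hcc ->; have hs1 := hcc.1.
exists C, (Alg sigma), (phi sigma); split=> //.
  split.
  - move=> th ps hth hps E.
    by rewrite (th_phi hcc hth) (th_phi hcc hps) E.
  - by move=> x; exists (th_of sigma x); split; [exact: th_cong | exact: phi_th_of].
  - move=> th ps hth hps; split; first exact: phi_mono.
    move=> hle; apply/subsetP => [[a b]] hab.
    apply/(key _ _ hs1 hps); apply: le_trans hle.
    exact/(key _ _ hs1 hth).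
move=> x; split.
  rewrite inE => /existsP[a /existsP[b /andP[hab /eqP ->]]].
  rewrite rep_rr //; exists (th_of sigma (rr sigma a b)); split; last exact: phi_th_of.
  split; first exact: th_cong.
  exists a, b; split; first by rewrite inE lexx.
  move=> ps hps hin; apply/subsetP => [[c e]]; rewrite inE /= => h.
  apply/(key _ _ hs1 hps); apply: le_trans h _; exact/(key _ _ hs1 hps).
move=> [th [[hc [a [b [hin hmin]]]] <-]].
have E : phi sigma th = rr sigma a b.
  apply/le_anti/andP; split; last exact/(key _ _ hs1 hc).
  rewrite -[X in _ <= X](phi_th_of (rr sigma a b) hcc).
  apply: phi_mono hcc (th_cong _ _) _; apply: hmin; first exact: th_cong.
  by rewrite inE lexx.
rewrite E /Rep inE; apply/existsP; case/orP: (le_total a b) => hab.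
  by exists a; apply/existsP; exists b; rewrite hab /= (rep_rr sigma hab).
by exists b; apply/existsP; exists a; rewrite hab /= (rep_rr sigma hab) rr_sym.
Qed.
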